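(* Let $(\tau,\{\mathbf R_s\}_{s\in\mathcal S})$ be a feasible TWAVRP solution. Then there exist arrival-time vectors $\bm a_s\in\mathcal X(\mathbf R_s,[e,\ell];\theta_s)$, $s\in\mathcal S$, such that (i) for every $i\in V_{\mathrm{cont}}$ and every $\beta\in\mathbb R$: either $a_{si}\le \beta+w_i/2$ for all $s\in\mathcal S$, or $a_{si}\ge \beta-w_i/2$ for all $s\in\mathcal S$; and (ii) for every $i\in V_{\mathrm{disc}}$ and every $b\in\{1,\dots,N_i-1\}$: either $a_{si}\le \bar y_{ib}$ for all $s\in\mathcal S$, or $a_{si}\ge \underline y_{i,b+1}$ for all $s\in\mathcal S$.
   Context: Let $G=(V,A)$ be a directed graph with $V=\{0,1,\dots,n\}$; node $0$ is the depot and $V_C=V\setminus\{0\}$ is the set of customers. The depot has operating window $[e_0,\ell_0]$, vehicles have capacity $Q$, and each customer $i\in V_C$ has an exogenous time window $[e_i,\ell_i]$. A vector of operational parameters $\theta$ consists of arc costs $c_{ij}\ge 0$ and arc travel times $t_{ij}\ge0$ for $(i,j)\in A$, and demands $q_i\ge 0$ and service times $u_i\ge 0$ for $i\in V_C$. The customer set is partitioned as $V_C=V_{\mathrm{cont}}\cup V_{\mathrm{disc}}$ (disjoint). For $i\in V_{\mathrm{cont}}$ a width $w_i\ge0$ with $e_i\le \ell_i-w_i$ is given and $TW_i=\{[y,y+w_i]: e_i\le y\le \ell_i-w_i\}$. For $i\in V_{\mathrm{disc}}$, $TW_i=\{[\underline y_{i1},\bar y_{i1}],\dots,[\underline y_{iN_i},\bar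 y_{iN_i}]\}$ is a finite set of intervals with $\underline y_{ib}\le\bar y_{ib}$, none contained in another, ordered so that $e_i=\underline y_{i1}<\dots<\underline y_{iN_i}$ and $\bar y_{i1}<\dots<\bar y_{iN_i}=\ell_i$. A route set $\mathbf R=(R_1,\dots,R_m)$ is a collection of pairwise disjoint nonempty sequences $R_k=(R_{k,1},\dots,R_{k,n_k})$ of distinct customers (every customer with positive demand appearing in exactly one sequence). For a vector $\tau=(\tau_1,\dots,\tau_n)$ of closed intervals, $\mathcal X(\mathbf R,\tau;\theta)$ is the set of $\bm a\in\mathbb R^n_{\ge0}$ with: $a_{R_{k,1}}\ge e_0+t_{0,R_{k,1}}$ for all $k$; $a_{R_{k,l+1}}-a_{R_{k,l}}\ge t_{R_{k,l},R_{k,l+1}}+u_{R_{k,l}}$ for all $k$ and $1\le l\le n_k-1$; $a_{R_{k,n_k}}\le \ell_0-t_{R_{k,n_k},0}-u_{R_{k,n_k}}$ for all $k$; and $a_i\in\tau_i$ for all $i\in V_C$. We write $\mathbf R\in\mathcal R(\tau;\theta)$ if $\sum_{i\in R_k}q_i\le Q$ for every $k$ and $\mathcal X(\mathbf R,\tau;\theta)\neq\emptyset$. Finitely many scenarios $\theta_1,\dots,\theta_S$ are given, $\mathcal S=\{1,\dots,S\}$. A feasible TWAVRP solution is a pair $(\tau,\{\mathbf R_s\}_{s\in\mathcal S})$ with $\tau_i\in TW_i$ for all $i\in V_C$ and $\mathbf R_s\in\mathcal R(\tau;\theta_s)$ for all $s$. $[e,\ell]$ denotes the vector $([e_1,\ell_1],\dots,[e_n,\ell_n])$,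 and $a_{si}$ denotes the $i$-th component of $\bm a_s$. *)

(* Defs.v *)
From Stdlib Require Import Reals Lra List.
Import ListNotations.
Open Scope R_scope.

(* Nodes are natural numbers: 0 is the depot, customers are 1..n. *)

Record Inst := mkInst {
  n : nat;
  arc : nat -> nat -> Prop;
  e0 : R; l0 : R;               (* depot window [e0, l0] *)
  Qcap : R;
  ew : nat -> R; lw : nat -> R;
  isCont : nat -> bool;         (* true: i in V_cont, false: i in V_disc *)
  w : nat -> R;                 (* widths for continuous customers *)
  Nw : nat -> nat;
  ylo : nat -> nat -> R;        (* underline y_{ib}, b = 1..N_i *)
  yhi : nat -> nat -> R         (* bar y_{ib}, b = 1..N_i *)
}.

Definition customer (I : Inst) (i : nat) : Prop := (1 <= i <= n I)%nat.

Definition InstWF (I : Inst) : Prop :=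
  (forall i, customer I i -> isCont I i = true ->
     0 <= w I i /\ ew I i <= lw I i - w I i) /\
  (forall i, customer I i -> isCont I i = false ->
     (1 <= Nw I i)%nat /\
     (forall b, (1 <= b <= Nw I i)%nat -> ylo I i b <= yhi I i b) /\
     ew I i = ylo I i 1 /\ yhi I i (Nw I i) = lw I i /\
     (forall b, (1 <= b < Nw I i)%nat ->
        ylo I i b < ylo I i (S b) /\ yhi I i b < yhi I i (S b))).

Record Theta := mkTheta {
  cost : nat -> nat -> R;
  tt : nat -> nat -> R;
  dem : nat -> R;
  svc : nat -> R
}.

Definition ThetaWF (I : Inst) (th : Theta) : Prop :=
  (forall i j, arc I i j -> 0 <= cost th i j /\ 0 <= tt th i j) /\
  (forall i, customer I i -> 0 <= dem th i /\ 0 <= svc th i).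

(* A closed interval [fst, snd]. *)
Definition interval := (R * R)%type.

Definition InTW (I : Inst) (i : nat) (iv : interval) : Prop :=
  if isCont I i then
    exists y, ew I i <= y <= lw I i - w I i /\ iv = (y, y + w I i)
  else
    exists b, (1 <= b <= Nw I i)%nat /\ iv = (ylo I i b, yhi I i b).

Definition exoTW (I : Inst) : nat -> interval := fun i => (ew I i, lw I i).

Definition RouteSet (I : Inst) (th : Theta) (Rs : list (list nat)) : Prop :=
  (forall r, In r Rs -> r <> []) /\
  (forall i, In i (concat Rs) -> customer I i) /\
  NoDup (concat Rs) /\
  (forall i, customer I i -> 0 < dem th i -> In i (concat Rs)).

Definition load (th : Theta) (r : list nat) : R :=
  fold_right (fun i acc => dem th i + acc) 0 r.

Fixpoint chainOK (th : Theta) (a : nat -> R) (x : nat) (rest : list nat) : Prop :=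
  match rest with
  | [] => True
  | y :: rest' => a y - a x >= tt th x y + svc th x /\ chainOK th a y rest'
  end.

Definition routeOK (I : Inst) (th : Theta) (a : nat -> R) (r : list nat) : Prop :=
  match r with
  | [] => True
  | x :: rest =>
      a x >= e0 I + tt th 0%nat x /\
      chainOK th a x rest /\
      a (last r 0%nat) <= l0 I - tt th (last r 0%nat) 0%nat - svc th (last r 0%nat)
  end.

Definition InX (I : Inst) (Rs : list (list nat)) (tau : nat -> interval)
    (th : Theta) (a : nat -> R) : Prop :=
  (forall i, customer I i -> 0 <= a i) /\
  (forall r, In r Rs -> routeOK I th a r) /\
  (forall i, customer I i -> fst (tau i) <= a i <= snd (tau i)).

Definition InCalR (I : Inst) (tau : nat -> interval) (th : Theta)
    (Rs : list (list nat)) : Prop :=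
  RouteSet I th Rs /\
  (forall r, In r Rs -> load th r <= Qcap I) /\
  exists a, InX I Rs tau th a.

(* Feasible TWAVRP solution; scenarios are indexed s = 0..S-1. *)
Definition Feasible (I : Inst) (S : nat) (theta : nat -> Theta)
    (tau : nat -> interval) (Rs : nat -> list (list nat)) : Prop :=
  (forall i, customer I i -> InTW I i (tau i)) /\
  (forall s, (s < S)%nat -> InCalR I tau (theta s) (Rs s)).

(* Main.v *)
Require Import Defs.
From Stdlib Require Import Reals List Lra Lia IndefiniteDescription.
Open Scope R_scope.

Lemma mono_y (f : nat -> R) (N : nat)
  (H : forall b, (1 <= b < N)%nat -> f b < f (S b)) :
  forall k b, (1 <= b)%nat -> (b + k <= N)%nat -> f b <= f (b + k)%nat.
Proof.
  induction k as [|k IH]; intros b Hb Hk.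
  - rewrite Nat.add_0_r; lra.
  - replace (b + S k)%nat with (S (b + k)) by lia.
    assert (f b <= f (b+k)%nat) by (apply IH; lia).
    assert (f (b+k)%nat < f (S (b+k))) by (apply H; lia). lra.
Qed.

Lemma mono_y' (f : nat -> R) (N : nat)
  (H : forall b, (1 <= b < N)%nat -> f b < f (S b)) :
  forall b b', (1 <= b)%nat -> (b <= b')%nat -> (b' <= N)%nat -> f b <= f b'.
Proof.
  intros b b' H1 H2 H3. replace b' with (b + (b' - b))%nat by lia.
  apply (mono_y f N H); lia.
Qed.

Theorem mainTheorem1 (I : Inst) (HI : InstWF I) (S : nat)
  (theta : nat -> Theta) (Htheta : forall s, (s < S)%nat -> ThetaWF I (theta s))
  (tau : nat -> interval) (Rs : nat -> list (list nat))
  (Hfeas : Feasible I S theta tau Rs) :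
  exists a : nat -> nat -> R,
    (forall s, (s < S)%nat -> InX I (Rs s) (exoTW I) (theta s) (a s)) /\
    (forall i, customer I i -> isCont I i = true -> forall beta : R,
       (forall s, (s < S)%nat -> a s i <= beta + w I i / 2) \/
       (forall s, (s < S)%nat -> a s i >= beta - w I i / 2)) /\
    (forall i, customer I i -> isCont I i = false ->
     forall b, (1 <= b <= Nw I i - 1)%nat ->
       (forall s, (s < S)%nat -> a s i <= yhi I i b) \/
       (forall s, (s < S)%nat -> a s i >= ylo I i (b + 1)%nat)).
Proof.
  destruct Hfeas as [Htw Hcal].
  destruct HI as [HIc HId].
  assert (Hex : forall s, exists a, (s < S)%nat -> InX I (Rs s) tau (theta s) a).
  { intro s. destruct (Nat.lt_ge_cases s S) as [Hs|Hs].
    - destruct (Hcal s Hs) as [_ [_ [a Ha]]]. exists a; auto.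
    - exists (fun _ => 0). intro; lia. }
  set (a := fun s => proj1_sig (constructive_indefinite_description _ (Hex s))).
  assert (Ha : forall s, (s < S)%nat -> InX I (Rs s) tau (theta s) (a s)).
  { intros s Hs. unfold a. destruct (constructive_indefinite_description _ (Hex s)); simpl; auto. }
  assert (Htau : forall i, customer I i -> ew I i <= fst (tau i) /\ snd (tau i) <= lw I i).
  { intros i Hi. specialize (Htw i Hi). unfold InTW in Htw.
    destruct (isCont I i) eqn:Hc.
    - destruct Htw as [y [Hy ->]]. simpl. destruct (HIc i Hi Hc). lra.
    - destruct Htw as [b [Hb ->]]. simpl.
      destruct (HId i Hi Hc) as [HN [Hle [He [Hl Hm]]]].
      split.
      + rewrite He. apply (mono_y' (ylo I i) (Nw I i)); try lia.
        intros; apply Hm; lia.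
      + rewrite <- Hl. apply (mono_y' (yhi I i) (Nw I i)); try lia.
        intros; apply Hm; lia. }
  exists a. split; [|split].
  - intros s Hs. destruct (Ha s Hs) as [H1 [H2 H3]].
    split; [exact H1|split; [exact H2|]].
    intros i Hi. unfold exoTW; simpl. specialize (H3 i Hi). specialize (Htau i Hi). lra.
  - intros i Hi Hc beta. specialize (Htw i Hi). unfold InTW in Htw. rewrite Hc in Htw.
    destruct Htw as [y [Hy Ht]].
    assert (Hb : forall s, (s < S)%nat -> y <= a s i <= y + w I i).
    { intros s Hs. destruct (Ha s Hs) as [_ [_ H3]]. specialize (H3 i Hi).
      rewrite Ht in H3. simpl in H3. exact H3. }
    destruct (Rle_lt_dec (y + w I i / 2) beta).
    + left. intros s Hs. specialize (Hb s Hs). lra.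
    + right. intros s Hs. specialize (Hb s Hs). lra.
  - intros i Hi Hc b Hb. specialize (Htw i Hi). unfold InTW in Htw. rewrite Hc in Htw.
    destruct Htw as [b0 [Hb0 Ht]].
    destruct (HId i Hi Hc) as [HN [Hle [He [Hl Hm]]]].
    assert (Hs0 : forall s, (s < S)%nat -> ylo I i b0 <= a s i <= yhi I i b0).
    { intros s Hs. destruct (Ha s Hs) as [_ [_ H3]]. specialize (H3 i Hi).
      rewrite Ht in H3. simpl in H3. exact H3. }
    destruct (Nat.le_gt_cases b0 b).
    + left. intros s Hs. specialize (Hs0 s Hs).
      assert (yhi I i b0 <= yhi I i b).
      { apply (mono_y' (yhi I i) (Nw I i)); try lia. intros; apply Hm; lia. }
      lra.
    + right. intros s Hs. specialize (Hs0 s Hs).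
      assert (ylo I i (b+1)%nat <= ylo I i b0).
      { apply (mono_y' (ylo I i) (Nw I i)); try lia. intros; apply Hm; lia. }
      lra.
Qed.
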